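(* Let $\kappa$ be a regular uncountable cardinal and $I$ an ideal on $\kappa$. If $I\restriction A$ is pleasant for every $A\in I^+$, then $I$ is normal.
   Context: An ideal on $\kappa$ is a family of subsets of $\kappa$ closed under subsets and finite unions, which is $<\kappa$-complete and contains all singletons. $I^+=\{X\subseteq\kappa: X\notin I\}$. For $A\in I^+$, $I\restriction A=\{X\subseteq\kappa: X\cap A\in I\}$. For $A\subseteq\kappa$ and $X_\alpha\subseteq\kappa$, $\bigtriangledown_{\alpha\in A}X_\alpha=\{\xi<\kappa:\exists\alpha<\xi\,(\alpha\in A\wedge \xi\in X_\alpha)\}$. $I$ is normal if $X_\alpha\in I$ for all $\alpha<\kappa$ implies $\bigtriangledown_{\alpha<\kappa}X_\alpha\in I$. $I$ is pleasant if whenever $A\in I$ and $X_\alpha\in I$ for all $\alpha$, then $\bigtriangledown_{\alpha\in A}X_\alpha\in I$. *)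

(* Defs.v *)
(* A cardinal kappa is modelled as a type T carrying a strict
   well-order [lt] (the ordinals below kappa); subsets of kappa are
   predicates T -> Prop. *)
From Stdlib Require Import Relations Wellfounded.

Section Defs.
Variable T : Type.
Variable lt : T -> T -> Prop.

Definition strict_well_order : Prop :=
  (forall x, ~ lt x x) /\
  (forall x y z, lt x y -> lt y z -> lt x z) /\
  (forall x y, lt x y \/ x = y \/ lt y x) /\
  well_founded lt.

Definition initial_segment (a : T) := { b : T | lt b a }.

Definition is_cardinal : Prop :=
  forall a : T, ~ exists f : T -> initial_segment a,
      forall x y, f x = f y -> x = y.

Definition is_regular : Prop :=
  forall (a : T) (f : initial_segment a -> T),
    exists g : T, forall b, lt (f b) g.

Definition uncountable : Prop :=
  ~ exists f : T -> nat, forall x y, f x = f y -> x = y.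

Definition regular_uncountable_cardinal : Prop :=
  strict_well_order /\ is_cardinal /\ is_regular /\ uncountable.

Definition set_sub (X Y : T -> Prop) := forall x, X x -> Y x.

Definition is_ideal (I : (T -> Prop) -> Prop) : Prop :=
  (forall X Y, I X -> set_sub Y X -> I Y) /\
  (forall X Y, I X -> I Y -> I (fun x => X x \/ Y x)) /\
  (forall (a : T) (X : T -> T -> Prop),
      (forall b, lt b a -> I (X b)) ->
      I (fun x => exists b, lt b a /\ X b x)) /\
  (forall a : T, I (fun x => x = a)).

Definition positive (I : (T -> Prop) -> Prop) (A : T -> Prop) := ~ I A.

Definition restrict (I : (T -> Prop) -> Prop) (A : T -> Prop) : (T -> Prop) -> Prop :=
  fun X => I (fun x => X x /\ A x).

Definition diag_union (A : T -> Prop) (X : T -> T -> Prop) : T -> Prop :=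
  fun xi => exists a, lt a xi /\ A a /\ X a xi.

Definition normal (I : (T -> Prop) -> Prop) : Prop :=
  forall X : T -> T -> Prop, (forall a, I (X a)) ->
    I (diag_union (fun _ => True) X).

Definition pleasant (I : (T -> Prop) -> Prop) : Prop :=
  forall (A : T -> Prop) (X : T -> T -> Prop),
    I A -> (forall a, I (X a)) -> I (diag_union A X).
End Defs.

(* Main.v *)
Require Import Defs.
From Stdlib Require Import Classical ClassicalEpsilon Wellfounded.

Theorem theorem2p4 (T : Type) (lt : T -> T -> Prop)
  (Hk : regular_uncountable_cardinal T lt)
  (I : (T -> Prop) -> Prop) (HI : is_ideal T lt I)
  (Hpl : forall A : T -> Prop, positive T I A -> pleasant T lt (restrict T I A)) :
  normal T lt I.
Proof.
  destruct Hk as [[_ [_ [_ Hwf]]] [_ [_ Hunc]]].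
  destruct HI as [Hsub [Hun [_ Hsing]]].
  assert (t0 : inhabited T).
  { destruct (classic (inhabited T)) as [h|h]; [exact h|].
    exfalso; apply Hunc; exists (fun _ => 0); intros x; exfalso; apply h; exact (inhabits x). }
  destruct t0 as [t0].
  assert (Hempty : forall Z : T -> Prop, (forall x, ~ Z x) -> I Z).
  { intros Z HZ. apply (Hsub _ _ (Hsing t0)). intros x Zx. exfalso; exact (HZ x Zx). }
  intros X HX.
  set (D := diag_union T lt (fun _ => True) X).
  assert (L : forall S : T -> Prop,
     I (fun xi => ~ S xi /\ exists a, lt a xi /\ S a /\ X a xi)).
  { intros S. set (B := fun xi => ~ S xi /\ exists a, lt a xi /\ S a /\ X a xi).
    destruct (classic (I B)) as [h|h]; [exact h|].
    exfalso. apply h.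
    assert (P := Hpl B h S X).
    unfold restrict in P.
    assert (P' : I (fun x => diag_union T lt S X x /\ B x)).
    { apply P.
      - apply Hempty. intros x [Sx [nSx _]]. exact (nSx Sx).
      - intros a. apply (Hsub _ _ (HX a)). intros x [Hx _]. exact Hx. }
    apply (Hsub _ _ P'). intros x Bx. split; [|exact Bx].
    destruct Bx as [_ [a [H1 [H2 H3]]]]. exists a; auto. }
  assert (Hg : forall x, exists a, D x -> lt a x /\ X a x).
  { intros x. destruct (classic (D x)) as [h|h].
    - destruct h as [a [H1 [_ H3]]]. exists a; auto.
    - exists x; intros h'; contradiction. }
  set (g := fun x => proj1_sig (constructive_indefinite_description _ (Hg x))).
  assert (gP : forall x, D x -> lt (g x) x /\ X (g x) x).
  { intros x. exact (proj2_sig (constructive_indefinite_description _ (Hg x))). }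
  set (F := fun x (f : forall y, lt y x -> bool) =>
      match excluded_middle_informative (D x) with
      | left h => negb (f (g x) (proj1 (gP x h)))
      | right _ => false end).
  set (c := Fix Hwf (fun _ => bool) F).
  assert (ceq : forall x, D x -> c x = negb (c (g x))).
  { intros x Dx. unfold c. rewrite Fix_eq.
    - unfold F at 1. destruct (excluded_middle_informative (D x)); [reflexivity|contradiction].
    - intros y f1 f2 Hf. unfold F. destruct (excluded_middle_informative (D y)); [|reflexivity].
      rewrite Hf. reflexivity. }
  apply (Hsub _ _ (Hun _ _ (L (fun x => c x = true)) (L (fun x => c x = false)))).
  intros x Dx. fold D in Dx. destruct (gP x Dx) as [G1 G2].
  pose proof (ceq x Dx) as E.
  destruct (c x) eqn:Ecx.
  - right. split; [congruence|]. exists (g x); repeat split; auto.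
    destruct (c (g x)); simpl in E; congruence.
  - left. split; [congruence|]. exists (g x); repeat split; auto.
    destruct (c (g x)); simpl in E; congruence.
Qed.
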